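(* Let $P$ be a finite ranked poset with rank function $\mathrm{rk}$. Let $R_1$ and $R_2$ be restriction functions on $P$ related by $R_1(p)=\{k+\mathrm{rk}(p):k\in R_2(p)\}$ for all $p\in P$. Then $R_1$ is consistent if and only if $R_2$ is weakly-consistent. Moreover, in this case $\Gamma(P,R_1)$ is isomorphic to $\Gamma'(P,R_2)$.
   Context: $P$ is ranked with rank function $\mathrm{rk}:P\to\mathbb{Z}$ if $x\lessdot y$ implies $\mathrm{rk}(y)=\mathrm{rk}(x)+1$. A restriction function assigns to each $p$ a nonempty finite subset of $\mathbb{Z}$. $R$ is consistent (resp. weakly-consistent) if for every cover $x\lessdot y$, $\min R(x)<\min R(y)$ and $\max R(x)<\max R(y)$ (resp. with $\le$ in place of $<$). $R(p)^*=R(p)\setminus\{\max R(p)\}$; $R(p)_{>k}$ is the smallest element of $R(p)$ greater than $k$; $R(p)_{<k}$ (resp. $R(p)_{\le k}$) is the largest element of $R(p)$ less than (resp. at most) $k$. $\Gamma(P,R)$ (for consistent $R$) is the poset on $\{(p,k):k\in R(p)^*\}$ whose order is the reflexive–transitive closure of: $(p_1,k_1)\lessdot(p_2,k_2)$ iff (1) $p_1=p_2$ and $R(p_1)_{>k_2}=k_1$, or (2) $p_1\lessdot p_2$, $k_1=R(p_1)_{<k_2}$, $k_1\ne\max R(p_1)$, and no $k\in R(p_2)$, $k>k_2$, has $R(p_1)_{<k}=k_1$. $\Gamma'(P,R)$ (for weakly-consistent $R$) is defined on the same kind of set by: (1) $p_1=p_2$ and $R(p_1)_{>k_2}=k_1$,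 or (2) $p_1\lessdot p_2$, $R(p_1)_{\le k_2}=k_1$, and no $k\in R(p_2)$, $k>k_2$, has $R(p_1)_{\le k}=k_1$. *)

(* Defs.v *)
From HB Require Import structures.
From mathcomp Require Import all_boot all_order all_algebra.
From mathcomp Require Import finmap.
From Stdlib Require Import Relation_Operators.
Set Implicit Arguments. Unset Strict Implicit. Unset Printing Implicit Defensive.
Import Order.TTheory GRing.Theory Num.Theory.
Local Open Scope fset_scope.
Local Open Scope ring_scope.

Section Defs.
Context {d : Order.disp_t} {P : finPOrderType d}.

Definition covers (x y : P) : Prop :=
  (x < y)%O /\ forall z : P, ~ ((x < z)%O /\ (z < y)%O).

Definition ranked (rk : P -> int) : Prop :=
  forall x y, covers x y -> rk y = rk x + 1.

Definition is_restriction (R : P -> {fset int}) : Prop :=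
  forall p, R p != fset0.

Definition is_minA (A : {fset int}) (m : int) : Prop :=
  m \in A /\ forall k, k \in A -> m <= k.
Definition is_maxA (A : {fset int}) (m : int) : Prop :=
  m \in A /\ forall k, k \in A -> k <= m.

Definition succA (A : {fset int}) (k j : int) : Prop :=
  j \in A /\ k < j /\ forall i, i \in A -> k < i -> j <= i.
Definition predA (A : {fset int}) (k j : int) : Prop :=
  j \in A /\ j < k /\ forall i, i \in A -> i < k -> i <= j.
Definition predeqA (A : {fset int}) (k j : int) : Prop :=
  j \in A /\ j <= k /\ forall i, i \in A -> i <= k -> i <= j.

Definition consistent (R : P -> {fset int}) : Prop :=
  forall x y, covers x y ->
    (forall m1 m2, is_minA (R x) m1 -> is_minA (R y) m2 -> m1 < m2) /\
    (forall M1 M2, is_maxA (R x) M1 -> is_maxA (R y) M2 -> M1 < M2).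

Definition weakly_consistent (R : P -> {fset int}) : Prop :=
  forall x y, covers x y ->
    (forall m1 m2, is_minA (R x) m1 -> is_minA (R y) m2 -> m1 <= m2) /\
    (forall M1 M2, is_maxA (R x) M1 -> is_maxA (R y) M2 -> M1 <= M2).

Definition gamma_elt (R : P -> {fset int}) (a : P * int) : Prop :=
  a.2 \in R a.1 /\ ~ is_maxA (R a.1) a.2.

Definition gamma_gen (R : P -> {fset int}) (a b : P * int) : Prop :=
  gamma_elt R a /\ gamma_elt R b /\
  let: (p1, k1) := a in let: (p2, k2) := b in
  ((p1 = p2 /\ succA (R p1) k2 k1) \/
   (covers p1 p2 /\ predA (R p1) k2 k1 /\ ~ is_maxA (R p1) k1 /\
    ~ (exists k, k \in R p2 /\ k2 < k /\ predA (R p1) k k1))).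

Definition gamma'_gen (R : P -> {fset int}) (a b : P * int) : Prop :=
  gamma_elt R a /\ gamma_elt R b /\
  let: (p1, k1) := a in let: (p2, k2) := b in
  ((p1 = p2 /\ succA (R p1) k2 k1) \/
   (covers p1 p2 /\ predeqA (R p1) k2 k1 /\
    ~ (exists k, k \in R p2 /\ k2 < k /\ predeqA (R p1) k k1))).

Definition gamma_le (R : P -> {fset int}) : P * int -> P * int -> Prop :=
  @clos_refl_trans (P * int) (gamma_gen R).
Definition gamma'_le (R : P -> {fset int}) : P * int -> P * int -> Prop :=
  @clos_refl_trans (P * int) (gamma'_gen R).

End Defs.

Definition poset_iso {T1 T2 : Type}
  (E1 : T1 -> Prop) (le1 : T1 -> T1 -> Prop)
  (E2 : T2 -> Prop) (le2 : T2 -> T2 -> Prop) : Prop :=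
  exists f : T1 -> T2,
    (forall a, E1 a -> E2 (f a)) /\
    (forall a b, E1 a -> E1 b -> f a = f b -> a = b) /\
    (forall c, E2 c -> exists a, E1 a /\ f a = c) /\
    (forall a b, E1 a -> E1 b -> (le1 a b <-> le2 (f a) (f b))).

(* Main.v *)
Require Import Defs.
From HB Require Import structures.
From mathcomp Require Import all_boot all_order all_algebra.
From mathcomp Require Import finmap.
From mathcomp Require Import zify.
From Stdlib Require Import Relation_Operators.
Import Order.TTheory GRing.Theory Num.Theory.
Local Open Scope fset_scope.
Local Open Scope ring_scope.

Section Shift.
Variables (A B : {fset int}) (c : int).
Hypothesis h : forall x, (x \in A) = (x - c \in B).
Let h' : forall y, (y \in B) = (y + c \in A).
Proof. by move=> y; rewrite h addrK. Qed.

Lemma minA_sh m : is_minA A m <-> is_minA B (m - c).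
Proof.
rewrite /is_minA; split=> [[mA H]|[mB H]]; split.
- by rewrite -h.
- move=> k kB; have := H _ (eq_ind _ is_true kB _ (h' k)); lia.
- by rewrite h.
- move=> k kA; have := H _ (eq_ind _ is_true kA _ (h k)); lia.
Qed.

Lemma maxA_sh m : is_maxA A m <-> is_maxA B (m - c).
Proof.
rewrite /is_maxA; split=> [[mA H]|[mB H]]; split.
- by rewrite -h.
- move=> k kB; have := H _ (eq_ind _ is_true kB _ (h' k)); lia.
- by rewrite h.
- move=> k kA; have := H _ (eq_ind _ is_true kA _ (h k)); lia.
Qed.

Lemma succA_sh k j : succA A k j <-> succA B (k - c) (j - c).
Proof.
rewrite /succA; split=> [[mA [kj H]]|[mB [kj H]]]; split.
- by rewrite -h.
- split; first lia.
  move=> i iB ki; have := H _ (eq_ind _ is_true iB _ (h' i)); lia.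
- by rewrite h.
- split; first lia.
  move=> i iA ki; have := H _ (eq_ind _ is_true iA _ (h i)); lia.
Qed.

Lemma predA_sh k j : predA A k j <-> predeqA B (k - (c + 1)) (j - c).
Proof.
rewrite /predA /predeqA; split=> [[mA [kj H]]|[mB [kj H]]]; split.
- by rewrite -h.
- split; first lia.
  move=> i iB ki; have := H _ (eq_ind _ is_true iB _ (h' i)); lia.
- by rewrite h.
- split; first lia.
  move=> i iA ki; have := H _ (eq_ind _ is_true iA _ (h i)); lia.
Qed.
End Shift.
Arguments minA_sh {A B c} h m.
Arguments maxA_sh {A B c} h m.
Arguments succA_sh {A B c} h k j.
Arguments predA_sh {A B c} h k j.

Theorem theorem2p26 (d : Order.disp_t) (P : finPOrderType d)
  (rk : P -> int) (R1 R2 : P -> {fset int}) :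
  ranked rk -> is_restriction R1 -> is_restriction R2 ->
  (forall p, R1 p = [fset (k + rk p) | k in R2 p]) ->
  (consistent R1 <-> weakly_consistent R2) /\
  (consistent R1 ->
     poset_iso (gamma_elt R1) (gamma_le R1) (gamma_elt R2) (gamma'_le R2)).
Proof.
move=> Hrk _ _ HR.
have mem : forall p x, (x \in R1 p) = (x - rk p \in R2 p).
  move=> p x; rewrite HR; apply/imfsetP/idP => [[k kB ->]|xB].
    by rewrite addrK.
  by exists (x - rk p) => //; rewrite subrK.
split.
  split=> H x y cxy; have ry := Hrk _ _ cxy; have [H1 H2] := H x y cxy; split.
  - move=> m1 m2 h1 h2.
    have h1' : is_minA (R1 x) (m1 + rk x) by apply/(minA_sh (mem x)); rewrite addrK.
    have h2' : is_minA (R1 y) (m2 + rk y) by apply/(minA_sh (mem y)); rewrite addrK.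
    have := H1 _ _ h1' h2'; lia.
  - move=> m1 m2 h1 h2.
    have h1' : is_maxA (R1 x) (m1 + rk x) by apply/(maxA_sh (mem x)); rewrite addrK.
    have h2' : is_maxA (R1 y) (m2 + rk y) by apply/(maxA_sh (mem y)); rewrite addrK.
    have := H2 _ _ h1' h2'; lia.
  - move=> m1 m2 /(minA_sh (mem x)) h1 /(minA_sh (mem y)) h2.
    have := H1 _ _ h1 h2; lia.
  - move=> m1 m2 /(maxA_sh (mem x)) h1 /(maxA_sh (mem y)) h2.
    have := H2 _ _ h1 h2; lia.
move=> _.
pose f := fun a : P * int => (a.1, a.2 - rk a.1).
pose g := fun a : P * int => (a.1, a.2 + rk a.1).
have fg : forall a, f (g a) = a by case=> p k; rewrite /f /g /= addrK.
have gf : forall a, g (f a) = a by case=> p k; rewrite /f /g /= subrK.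
have elt : forall a, gamma_elt R1 a <-> gamma_elt R2 (f a).
  case=> p k; rewrite /gamma_elt /f /= mem (maxA_sh (mem p)) //.
have gen : forall a b, gamma_gen R1 a b <-> gamma'_gen R2 (f a) (f b).
  move=> a b; rewrite /gamma_gen /gamma'_gen elt elt.
  case: a b => [p1 k1] [p2 k2] /=.
  split=> -[ea [eb H]]; split=> //; split=> //.
  - case: H => [[<- hs]|[cv [hp [_ hn]]]].
      by left; split=> //; apply/(succA_sh (mem p1)).
    have r2 := Hrk _ _ cv.
    right; split=> //; split.
      by move: hp => /(predA_sh (mem p1)); rewrite -r2.
    move=> [m [mB [km hm]]]; apply: hn; exists (m + rk p2); split.
      by rewrite mem addrK.
    split; first lia.
    by apply/(predA_sh (mem p1)); rewrite -r2 addrK.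
  - case: H => [[<- hs]|[cv [hp hn]]].
      by left; split=> //; apply/(succA_sh (mem p1)).
    have r2 := Hrk _ _ cv.
    right; split=> //; split.
      by apply/(predA_sh (mem p1)); rewrite -r2.
    split; first by case: ea => _ nm /(maxA_sh (mem p1)).

    move=> [m [mB [km hm]]]; apply: hn; exists (m - rk p2); split.
      by rewrite -mem.
    split; first lia.
    by move: hm => /(predA_sh (mem p1)); rewrite -r2.
exists f; split; first by move=> a /elt.
split; first by move=> a b _ _ /(congr1 g); rewrite !gf.
split.
  by move=> c ec; exists (g c); split; [apply/elt; rewrite fg | rewrite fg].
move=> a b _ _; split.
  elim=> [x y /gen H|x|x y z _ IH1 _ IH2].
  - exact: rt_step.
  - exact: rt_refl.
  - exact: rt_trans IH1 IH2.
rewrite -{2}(gf a) -{2}(gf b).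
elim=> [x y H|x|x y z _ IH1 _ IH2].
- by apply: rt_step; apply/gen; rewrite !fg.
- exact: rt_refl.
- exact: rt_trans IH1 IH2.
Qed.
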